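(* Let $\mathcal{H}$ be an infinite dimensional complex Hilbert space and let $\phi:\mathcal{B}(\mathcal{H})\to\mathcal{B}(\mathcal{H})$ be a bijective map preserving the Douglas solution in both directions. Then for every $B\in\mathcal{B}(\mathcal{H})$: $\ker B=\{0\}$ if and only if $\ker\phi(B)=\{0\}$.
   Context: $\mathcal{B}(\mathcal{H})$ denotes the algebra of all bounded linear operators on $\mathcal{H}$. For $A,B\in\mathcal{B}(\mathcal{H})$ with $\operatorname{ran}A\subseteq\operatorname{ran}B$, the Douglas solution of $A=BX$ is the unique $D\in\mathcal{B}(\mathcal{H})$ with $BD=A$ and $\operatorname{ran}D\subseteq(\ker B)^\perp$. A map $\phi:\mathcal{B}(\mathcal{H})\to\mathcal{B}(\mathcal{H})$ preserves the Douglas solution in both directions if for all $A,B,X\in\mathcal{B}(\mathcal{H})$: $X$ is the Douglas solution of $A=BX$ if and only if $\phi(X)$ is the Douglas solution of $\phi(A)=\phi(B)Y$. *)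

(* Defs.v *)
From mathcomp Require Import all_boot all_algebra.
From mathcomp Require Import complex reals.
Set Implicit Arguments. Unset Strict Implicit. Unset Printing Implicit Defensive.
Import GRing.Theory Num.Theory.
Local Open Scope ring_scope.

Section Hilbert.
Variable R : realType.
Variable H : lmodType R[i].
Variable ip : H -> H -> R[i].   (* inner product, linear in the 1st argument *)

Definition ipnorm (x : H) : R[i] := sqrtC (ip x x).

Definition is_inner_product : Prop :=
  [/\ (forall a x y z, ip (a *: x + y) z = a * ip x z + ip y z),
      (forall x y, ip x y = (ip y x)^*),
      (forall x, 0 <= ip x x) &
      (forall x, ip x x = 0 -> x = 0)].

Definition ip_complete : Prop :=
  forall u : nat -> H,
    (forall e : R, 0 < e -> exists N, forall m n, (N <= m)%N -> (N <= n)%N ->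
        ipnorm (u m - u n) < e%:C%C) ->
    exists l : H, forall e : R, 0 < e -> exists N, forall n, (N <= n)%N ->
        ipnorm (u n - l) < e%:C%C.

Definition hilbert_space : Prop := is_inner_product /\ ip_complete.

Definition infinite_dimensional : Prop :=
  forall n : nat, exists v : 'I_n -> H,
    forall c : 'I_n -> R[i], \sum_(k < n) c k *: v k = 0 -> forall k, c k = 0.

Definition is_bounded_linear (T : H -> H) : Prop :=
  (forall (a : R[i]) x y, T (a *: x + y) = a *: T x + T y) /\
  exists M : R, forall x, ipnorm (T x) <= M%:C%C * ipnorm x.

Record bop := Bop { bop_fun :> H -> H; bop_bounded : is_bounded_linear bop_fun }.

Definition kernel (T : H -> H) : H -> Prop := fun x => T x = 0.
Definition range (T : H -> H) : H -> Prop := fun y => exists x, T x = y.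
Definition orth (S : H -> Prop) : H -> Prop := fun y => forall x, S x -> ip y x = 0.

Definition douglas_solution (X A B : bop) : Prop :=
  (forall x, B (X x) = A x) /\
  (forall y, range X y -> orth (kernel B) y).

Definition preserves_douglas_both (phi : bop -> bop) : Prop :=
  forall A B X : bop,
    douglas_solution X A B <-> douglas_solution (phi X) (phi A) (phi B).

Definition trivial_kernel (T : H -> H) : Prop := forall x, kernel T x -> x = 0.
End Hilbert.

(* Main.v *)
Require Import Defs.
From mathcomp Require Import all_boot all_algebra.
From mathcomp Require Import all_order complex reals.
Import Order.TTheory GRing.Theory Num.Theory.
Local Open Scope ring_scope.

Section Aux.
Variable R : realType.
Variable H : lmodType R[i].
Variable ip : H -> H -> R[i].
Hypothesis hip : is_inner_product ip.

Lemma ipnorm_ge0 x : 0 <= ipnorm ip x.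
Proof. by rewrite /ipnorm sqrtC_ge0; case: hip. Qed.

Lemma bound_nonneg (T : H -> H) : is_bounded_linear ip T ->
  exists M : R, 0 <= M /\ forall x, ipnorm ip (T x) <= M%:C%C * ipnorm ip x.
Proof.
case=> _ [M HM]; exists `|M|; split => // x.
apply: le_trans (HM x) _; apply: ler_wpM2r; first exact: ipnorm_ge0.
by rewrite lecR ler_norm.
Qed.

Lemma comp_bounded (T S : H -> H) : is_bounded_linear ip T ->
  is_bounded_linear ip S -> is_bounded_linear ip (fun x => T (S x)).
Proof.
move=> hT hS; split.
  by move=> a x y; rewrite hS.1 hT.1.
have [MT [MT0 HT]] := @bound_nonneg T hT.
have [MS [MS0 HS]] := @bound_nonneg S hS.
exists (MT * MS) => x; apply: le_trans (HT (S x)) _.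
rewrite rmorphM -mulrA; apply: ler_wpM2l; first by rewrite lecR.
exact: HS.
Qed.

Lemma id_bounded : is_bounded_linear ip (fun x => x).
Proof. split => //; exists 1 => x; by rewrite mul1r. Qed.

Lemma ip_x0 y : ip y 0 = 0.
Proof.
case: hip => lin sym _ _.
have h : ip 0 y = 0.
  have := lin 1 0 0 y; rewrite scaler0 addr0 mul1r => e.
  have := congr1 (fun z => z - ip 0 y) e; rewrite /= (addrK (ip 0 y)) subrr; by move=> ->.
by rewrite sym h conjC0.
Qed.

Lemma triv_iff (B : bop ip) :
  trivial_kernel B <-> forall X : bop ip, exists A : bop ip, douglas_solution X A B.
Proof.
split.
  move=> tk X.
  exists (Bop (@comp_bounded B X (bop_bounded B) (bop_bounded X))).
  split => //= y _ x kx; by rewrite (tk x kx) ip_x0.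
move=> h x kx.
have [A [_ hA]] := h (Bop id_bounded).
have := hA x (ex_intro _ x erefl) x kx.
case: hip => _ _ _ hd e; exact: hd.
Qed.
End Aux.

Theorem claim2 (R : realType) (H : lmodType R[i]) (ip : H -> H -> R[i])
  (hH : hilbert_space ip) (hinf : infinite_dimensional H)
  (phi : bop ip -> bop ip) (phi_bij : bijective phi)
  (phi_pres : preserves_douglas_both phi) :
  forall B : bop ip, trivial_kernel B <-> trivial_kernel (phi B).
Proof.
have hip := hH.1.
case: phi_bij => g gK Kg.
move=> B; rewrite !(@triv_iff R H ip hip); split.
  move=> h X'; have [A hA] := h (g X').
  exists (phi A); rewrite -{1}(Kg X'); exact: (proj1 (phi_pres _ _ _) hA).
move=> h X; have [A' hA] := h (phi X).
exists (g A'); apply/(phi_pres _ _ _); by rewrite Kg.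
Qed.
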